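(* Let $G$ be a group, $E$ a real Banach space, and $f\colon G\to E$ such that $\|f(xy)+f(xy^{-1})-2f(x)\|\le c$ for all $x,y\in G$, for some $c>0$. For $m\in\mathbb{N}$, $m\ge 2$, let $\varphi_m(x)=\lim_{k\to\infty}\frac{1}{m^k}f(x^{m^k})$. Then $\varphi_m\in KJ(G;E)$.
   Context: For such $f$ and $m\ge 2$ the limit defining $\varphi_m(x)$ exists in $E$ for every $x\in G$. $KJ(G;E)$ is the space of functions $g\colon G\to E$ for which there exists a constant $d>0$ with $\|g(xy)+g(xy^{-1})-2g(x)\|\le d$ for all $x,y\in G$. *)

(* Defs.v *)
From HB Require Import structures.
From mathcomp Require Import all_boot all_order all_algebra.
From mathcomp Require Import all_classical all_reals all_analysis.
Set Implicit Arguments. Unset Strict Implicit. Unset Printing Implicit Defensive.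
Import Order.TTheory GRing.Theory Num.Theory numFieldNormedType.Exports.
Local Open Scope ring_scope.
Local Open Scope classical_set_scope.

Definition phi_m (R : realType) (G : groupType) (E : normedModType R)
    (f : G -> E) (m : nat) (x : G) : E :=
  lim ((fun k : nat => ((m ^ k)%:R)^-1 *: f (x ^+ (m ^ k))%g) @ \oo).

Definition KJ (R : realType) (G : groupType) (E : normedModType R)
    (g : G -> E) : Prop :=
  exists d : R, 0 < d /\
    forall x y : G, `| g (x * y)%g + g (x * y^-1)%g - 2 *: g x | <= d.

(* Main.v *)
Require Import Defs.
From HB Require Import structures.
From mathcomp Require Import all_boot all_order all_algebra.
From mathcomp Require Import all_classical all_reals all_analysis.
From mathcomp Require Import ring lra.
Import Order.TTheory GRing.Theory Num.Theory numFieldNormedType.Exports.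
Local Open Scope ring_scope.
Local Open Scope classical_set_scope.

Lemma id1 (M : zmodType) (F0 F1 F2 g1 e : M) :
  (F2 - e) - (F1 - e) - (g1 - e) = ((F1 - e) - (F0 - e) - (g1 - e)) + (F2 + F0 - (F1 + F1)).
Proof.
rewrite !opprB !opprD !addrA !subrK.
rewrite (addrAC F1 (-F0) e) (addrAC _ (-F0) (-g1)) (addrAC _ (-F0) F2) subrK.
rewrite (addrC F1 e) (addrAC e F1 (-g1)) (addrAC _ F1 F2) addrK.
by rewrite -(addrA (e - g1) F2) -(addrA (F2 - F1)) addrC.
Qed.
Lemma id2 (M : zmodType) (A1 Sn Sn1 : M) (n : M):
 Sn1 - (n + A1) = (Sn - n) + (Sn1 - Sn - A1).
Proof. by rewrite opprD addrA addrCA !addrA subrK. Qed.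
Lemma id3 (M : zmodType) (X e A B : M) : (X - e - (A - B)) + (e - B) = X - A.
Proof. by rewrite opprB -addrA addrACA addKr -addrA (addrC B) addrK. Qed.
Lemma id4 (M : zmodType) (P Q S F1 F2 F3 : M) :
  P + Q - (S + S) = (F1 + F2 - (F3 + F3)) + ((P - F1) + (Q - F2)) - ((S - F3) + (S - F3)).
Proof.
rewrite (addrACA P) (addrACA S) -!opprD.
set W := F1 + F2; set Z := F3 + F3; set V := P + Q.
by rewrite (addrC (W - Z)) addrA subrK opprB addrA subrK.
Qed.

Lemma powbound (R : realType) (G : groupType) (E : normedModType R)
    (f : G -> E) (c : R)
    (hf : forall x y : G, `| f (x * y)%g + f (x * y^-1)%g - 2 *: f x | <= c)
    (y : G) (n : nat) :
  `| (f (y ^+ n)%g - f 1%g) - n%:R *: (f y - f 1%g) | <= c * (n%:R ^+ 2).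
Proof.
have c0 : 0 <= c by apply: le_trans (hf 1%g 1%g); exact: normr_ge0.
set a := fun k => f (y ^+ k)%g - f 1%g.
have P : forall k, `| a k.+1 - a k - a 1%N | <= c * k%:R.
  elim=> [|k IH].
    by rewrite /a expg0 subrr subr0 subrr normr0 mulr0.
  have H := hf (y ^+ k.+1)%g y.
  have e1 : (y ^+ k.+1 * y)%g = (y ^+ k.+2)%g by rewrite -expgSr.
  have e2 : (y ^+ k.+1 * y^-1)%g = (y ^+ k)%g by rewrite expgSr mulgK.
  rewrite e1 e2 in H.
  have -> : a k.+2 - a k.+1 - a 1%N = (a k.+1 - a k - a 1%N) +
     (f (y ^+ k.+2)%g + f (y ^+ k)%g - 2 *: f (y ^+ k.+1)%g).
    by rewrite /a scaler_nat mulr2n (@id1 _ (f (y ^+ k)%g)).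
  apply: le_trans (ler_normD _ _) _.
  apply: le_trans (lerD IH H) _.
  by rewrite -natr1 mulrDr mulr1.
elim: n => [|n IH].
  by rewrite /a /= expg0 subrr scale0r subr0 normr0 expr0n mulr0.
have -> : a n.+1 - n.+1%:R *: (f y - f 1%g) = (a n - n%:R *: (f y - f 1%g)) + (a n.+1 - a n - a 1%N).
  by rewrite /a expg1 -natr1 scalerDl scale1r (@id2 _ _ (f (y ^+ n)%g - f 1%g)).
apply: le_trans (ler_normD _ _) _.
apply: le_trans (lerD IH (P n)) _.
rewrite -natr1 -mulrDr ler_wpM2l //.
have n0 : 0 <= n%:R :> R by rewrite ler0n.
nra.
Qed.

Lemma telescope_bound (R : realType) (E : normedModType R) (v : nat -> E)
  (m : nat) (hm : (2 <= m)%N) (C : R) (hC : 0 <= C)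
  (hv : forall k, `| v k.+1 - v k | <= C / (m%:R ^+ k.+1)) (k n : nat) :
  `| v (k + n)%N - v k | <= C / (m%:R - 1) * ((m%:R ^+ k)^-1 - (m%:R ^+ (k + n))^-1).
Proof.
have r1 : 1 < m%:R :> R by rewrite ltr1n.
elim: n => [|n IH].
  by rewrite addn0 !subrr normr0 mulr0.
apply: le_trans (ler_distD (v (k + n)%N) _ _) _.
rewrite addnS.
have pos : 0 < m%:R ^+ (k + n) :> R by apply: exprn_gt0; lra.
have -> : C / (m%:R - 1) * ((m%:R ^+ k)^-1 - (m%:R ^+ (k + n).+1)^-1) =
   C / m%:R ^+ (k + n).+1 + C / (m%:R - 1) * ((m%:R ^+ k)^-1 - (m%:R ^+ (k + n))^-1).
  rewrite exprS; field.
  apply/and4P; split; rewrite ?subr_eq0 ?expf_neq0 //; try (apply/negP => /eqP; lra).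
by apply: lerD; [apply: hv | apply: IH].
Qed.

Lemma geom_cvg (R : realType) (E : completeNormedModType R) (v : nat -> E)
  (m : nat) (hm : (2 <= m)%N) (C : R) (hC : 0 <= C)
  (hv : forall k, `| v k.+1 - v k | <= C / (m%:R ^+ k.+1)) :
  cvg (v @ \oo) /\ `| v 0%N - lim (v @ \oo) | <= C / (m%:R - 1).
Proof.
have r1 : 1 < m%:R :> R by rewrite ltr1n.
have B0 : 0 <= C / (m%:R - 1) by apply: divr_ge0 => //; lra.
have T := @telescope_bound R E v m hm C hC hv.
have Tk : forall k n, (k <= n)%N -> `| v n - v k | <= C / (m%:R - 1) / m%:R ^+ k.
  move=> k n kn; rewrite -(subnKC kn).
  apply: le_trans (T k (n - k)%N) _.
  rewrite ler_wpM2l // lerBlDr lerDl invr_ge0 exprn_ge0 //; lra.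
have cv : cvg (v @ \oo).
  apply/cauchy_cvgP/cauchy_exP => e e0.
  set K := (Num.truncn (C / (m%:R - 1) / e)).+1.
  have hK : C / (m%:R - 1) / e < K%:R by apply: truncnS_gt.
  have hKm : (K < m ^ K)%N by apply: ltn_expl.
  exists (v K); exists K => // n /= Kn.
  rewrite -ball_normE /ball_ /= distrC.
  apply: le_lt_trans (Tk _ _ Kn) _.
  have mK : K%:R < m%:R ^+ K :> R by rewrite -natrX ltr_nat.
  have pK : 0 < m%:R ^+ K :> R by apply: exprn_gt0; lra.
  rewrite ltr_pdivrMr // -ltr_pdivrMl // mulrC.
  by apply: lt_trans hK _.
split=> //.
apply: (@closed_cvg _ _ _ _ v (closed_ball_ Num.norm (v 0%N) (C / (m%:R - 1)))) cv.
  exact: closed_closed_ball_.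
exists 0%N => // n _; rewrite /closed_ball_ /= distrC.
apply: le_trans (Tk 0%N n isT) _.
by rewrite expr0 divr1.
Qed.

Theorem lemma2p5 (R : realType) (G : groupType) (E : completeNormedModType R)
    (f : G -> E) (c : R) (hc : 0 < c)
    (hf : forall x y : G, `| f (x * y)%g + f (x * y^-1)%g - 2 *: f x | <= c)
    (m : nat) (hm : (2 <= m)%N) :
  KJ (phi_m f m).
Proof.
have r1 : 1 < m%:R :> R by rewrite ltr1n.
set r : R := m%:R.
set C := c * r ^+ 2 + (r + 1) * `|f 1%g|.
have C0 : 0 <= C.
  have := normr_ge0 (f 1%g); have : 0 <= r ^+ 2 by apply: sqr_ge0.
  rewrite /C; nra.
have stepb : forall y : G, `|f (y ^+ m)%g - r *: f y| <= C.
  move=> y; rewrite -(@id3 _ (f (y ^+ m)%g) (f 1%g) (r *: f y) (r *: f 1%g)) -scalerBr.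
  apply: le_trans (ler_normD _ _) _; apply: lerD; first exact: powbound.
  apply: le_trans (ler_normB _ _) _.
  rewrite normrZ ger0_norm ?ler0n // mulrDl mul1r addrC.
  done.
have phib : forall x, `|phi_m f m x - f x| <= C / (r - 1).
  move=> x.
  set v := fun k : nat => ((m ^ k)%:R)^-1 *: f (x ^+ (m ^ k))%g.
  have hv : forall k, `|v k.+1 - v k| <= C / r ^+ k.+1.
    move=> k; rewrite /v expnSr expgnA natrM.
    set y := (x ^+ (m ^ k))%g; set t : R := (m ^ k)%:R.
    have t0 : 0 < t by rewrite /t ltr0n expn_gt0 (leq_trans _ hm).
    have -> : (t * m%:R)^-1 *: f (y ^+ m)%g - t^-1 *: f y =
              (t * r)^-1 *: (f (y ^+ m)%g - r *: f y).
      rewrite scalerBr scalerA; congr (_ - _ *: _); rewrite /r; field.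
      by rewrite -/r -/t (lt0r_neq0 t0) andbT; apply/negP => /eqP; lra.
    rewrite normrZ ger0_norm; last by rewrite invr_ge0; apply: mulr_ge0; lra.
    have -> : r ^+ k.+1 = t * r by rewrite exprSr /t natrX.
    rewrite mulrC ler_pdivlMr; last by apply: mulr_gt0; lra.
    by rewrite divfK //; apply: lt0r_neq0; apply: mulr_gt0; lra.
  have [cv hb] := @geom_cvg R E v m hm C C0 hv.
  change (phi_m f m x) with (lim (v @ \oo)).
  by move: hb; rewrite /v expn0 expg1 invr1 scale1r distrC.
set B := C / (r - 1).
have B0 : 0 <= B by apply: divr_ge0 => //; lra.
exists (c + 4 * B); split; first lra.
move=> x y.
have H := hf x y.
rewrite scaler_nat mulr2n in H; rewrite scaler_nat mulr2n.
rewrite (@id4 _ _ _ _ (f (x * y)%g) (f (x * y^-1)%g) (f x)).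
apply: le_trans (ler_normB _ _) _.
apply: le_trans (lerD (ler_normD _ _) (ler_normD _ _)) _.
apply: le_trans (lerD (lerD (lexx _) (ler_normD _ _)) (lexx _)) _.
have := phib (x * y)%g; have := phib (x * y^-1)%g; have := phib x.
move=> h1 h2 h3; rewrite /B; lra.
Qed.
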